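(* Every finitely generated co-Heyting algebra is precompact. Every finitely presented co-Heyting algebra is precompact and Hausdorff.
   Context: A co-Heyting algebra is a bounded distributive lattice $(L,0,1,\vee,\wedge)$ such that $a-b=\min\{c\in L: a\le b\vee c\}$ exists for all $a,b$ (finitely generated/presented in the language $\{0,1,\vee,\wedge,-\}$). For an ideal $I$, $L/I$ is the quotient by $a\equiv_I b\iff(a-b)\vee(b-a)\in I$. $\operatorname{Spec}L$ is the set of prime filters ordered by inclusion; height = foundation rank there; $\operatorname{codim}_La=\min\{\operatorname{height}\mathfrak p: a\in\mathfrak p\}$ ($+\infty$ if none); $dL=\{a:\operatorname{codim}_La\ge d\}$ is an ideal. $L$ is Hausdorff if every nonzero element has finite codimension; $L$ is precompact if $L/dL$ is finite for every positive integer $d$. *)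

(* Defs.v *)
From HB Require Import structures.
From mathcomp Require Import all_boot all_order.
Set Implicit Arguments. Unset Strict Implicit. Unset Printing Implicit Defensive.
Import Order.Theory.
Local Open Scope order_scope.

Section CoHeyting.
Context {disp : Order.disp_t} {L : tbDistrLatticeType disp}.

Definition is_coheyting (sub : L -> L -> L) : Prop :=
  forall a b, a <= b `|` sub a b /\ (forall c, a <= b `|` c -> sub a b <= c).

Inductive cterm (n : nat) : Type :=
| CVar of 'I_n
| CBot
| CTop
| CJoin of cterm n & cterm n
| CMeet of cterm n & cterm n
| CSub of cterm n & cterm n.

Fixpoint ceval (sub : L -> L -> L) (n : nat) (g : 'I_n -> L) (t : cterm n) : L :=
  match t with
  | CVar i => g i
  | CBot => \bot
  | CTop => \top
  | CJoin t1 t2 => ceval sub g t1 `|` ceval sub g t2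
  | CMeet t1 t2 => ceval sub g t1 `&` ceval sub g t2
  | CSub t1 t2 => sub (ceval sub g t1) (ceval sub g t2)
  end.

Definition generates (sub : L -> L -> L) (n : nat) (g : 'I_n -> L) : Prop :=
  forall x : L, exists t : cterm n, ceval sub g t = x.

Definition fin_generated (sub : L -> L -> L) : Prop :=
  exists (n : nat) (g : 'I_n -> L), generates sub g.

Definition prime_filter (p : L -> Prop) : Prop :=
  [/\ p \top, ~ p \bot,
      (forall a b, p a -> a <= b -> p b),
      (forall a b, p a -> p b -> p (a `&` b)) &
      (forall a b, p (a `|` b) -> p a \/ p b)].

Definition strict_sub (q p : L -> Prop) : Prop :=
  (forall x, q x -> p x) /\ (exists x, p x /\ ~ q x).

(* height_ge p n : the foundation rank (height) of p in Spec L is >= n.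
   (Elements outside the well-founded part count as having infinite height.) *)
Fixpoint height_ge (p : L -> Prop) (n : nat) : Prop :=
  match n with
  | 0 => True
  | n'.+1 => exists q, prime_filter q /\ strict_sub q p /\ height_ge q n'
  end.

(* codim a >= n  (codim = min height of a prime filter containing a, +oo if none) *)
Definition codim_ge (a : L) (n : nat) : Prop :=
  forall p, prime_filter p -> p a -> height_ge p n.

Definition dIdeal (d : nat) : L -> Prop := fun a => codim_ge a d.

Definition codim_finite (a : L) : Prop :=
  exists p, [/\ prime_filter p, p a & exists n, ~ height_ge p n].

Definition cong_mod (sub : L -> L -> L) (I : L -> Prop) (a b : L) : Prop :=
  I (sub a b `|` sub b a).

Definition quotient_finite (sub : L -> L -> L) (I : L -> Prop) : Prop :=
  exists s : seq L, forall a, exists2 b, b \in s & cong_mod sub I a b.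

Definition precompact (sub : L -> L -> L) : Prop :=
  forall d : nat, (0 < d)%N -> quotient_finite sub (dIdeal d).

Definition hausdorff : Prop :=
  forall a : L, a <> \bot -> codim_finite a.

End CoHeyting.

Definition coheyting_hom {d1 : Order.disp_t} {L : tbDistrLatticeType d1}
  {d2 : Order.disp_t} {M : tbDistrLatticeType d2}
  (subL : L -> L -> L) (subM : M -> M -> M) (f : L -> M) : Prop :=
  [/\ f \bot = \bot, f \top = \top,
      (forall x y, f (x `|` y) = f x `|` f y),
      (forall x y, f (x `&` y) = f x `&` f y) &
      (forall x y, f (subL x y) = subM (f x) (f y))].

Definition fin_presented {d1 : Order.disp_t} {L : tbDistrLatticeType d1}
  (sub : L -> L -> L) : Prop :=
  exists (n m : nat) (g : 'I_n -> L) (E : 'I_m -> cterm n * cterm n),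
    [/\ generates sub g,
        (forall j, ceval sub g (E j).1 = ceval sub g (E j).2) &
        (forall (d2 : Order.disp_t) (M : tbDistrLatticeType d2) (subM : M -> M -> M),
           is_coheyting subM ->
           forall h : 'I_n -> M,
             (forall j, ceval subM h (E j).1 = ceval subM h (E j).2) ->
             exists f : L -> M, coheyting_hom sub subM f /\ forall i, f (g i) = h i)].

(* Main.v *)
Require Import Defs.
From HB Require Import structures.
From mathcomp Require Import all_boot all_order.
From mathcomp Require Import boolp.
From mathcomp Require classical_sets.
From Stdlib Require Import ClassicalEpsilon.
Set Implicit Arguments. Unset Strict Implicit. Unset Printing Implicit Defensive.
Import Order.Theory.
Local Open Scope order_scope.

Section FinSub.
Context {disp : Order.disp_t} {L : tbDistrLatticeType disp} (k : nat) (v : 'I_k -> L).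

Definition jm (F : {set {set 'I_k}}) : L := \join_(S in F) \meet_(i in S) v i.
Definition inS : {pred L} := fun x => [exists F, jm F == x].

Lemma meet_joinsr (x : L) I (r : seq I) (P : pred I) (G : I -> L) :
  x `&` \join_(i <- r | P i) G i = \join_(i <- r | P i) (x `&` G i).
Proof. exact: (big_morph (Order.meet x) (meetUr x) (meetx0 x)). Qed.

Lemma inS_meet : meet_closed inS.
Proof.
move=> x y /existsP[F /eqP <-] /existsP[G /eqP <-]; apply/existsP.
exists [set S :|: T | S in F, T in G]; apply/eqP/le_anti/andP; split.
  apply/joinsP => X /imset2P[S T SF TG ->]; rewrite meets_setU.
  rewrite lexI; apply/andP; split.
    by rewrite leIxl //; apply: joins_sup.
  by rewrite leIxr //; apply: joins_sup.
rewrite meetC meet_joinsr; apply/joinsP => T TG.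
rewrite meetC meet_joinsr; apply/joinsP => S SF.
have HH := imset2_f (fun S T => S :|: T) TG SF. apply: (joins_min HH); by rewrite meets_setU.
Qed.

Lemma inS_join : join_closed inS.
Proof.
move=> x y /existsP[F /eqP <-] /existsP[G /eqP <-]; apply/existsP.
by exists (F :|: G); rewrite /jm joins_setU.
Qed.

Lemma inS_bot : \bot \in inS.
Proof. by apply/existsP; exists set0; rewrite /jm big_set0. Qed.

Lemma inS_top : \top \in inS.
Proof. by apply/existsP; exists [set set0]; rewrite /jm big_set1 big_set0. Qed.

Lemma inS_v i : v i \in inS.
Proof. by apply/existsP; exists [set [set i]]; rewrite /jm big_set1 big_set1. Qed.

Definition Mt := {x : L | inS x}.
HB.instance Definition _ := [isSub of Mt for (@proj1_sig L (fun x => inS x))].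
HB.instance Definition _ := [Choice of Mt by <:].
HB.instance Definition _ := Order.isTBLatticeClosed.Build disp L inS inS_meet inS_join inS_bot inS_top.
HB.instance Definition _ := [SubChoice_isTBSubLattice of Mt by <: with disp].
Lemma MmeetUl : @left_distributive Mt Mt Order.meet Order.join.
Proof. by move=> x y z; apply: val_inj => /=; rewrite meetUl. Qed.
HB.instance Definition _ := Order.Lattice_Meet_isDistrLattice.Build disp Mt MmeetUl.


Lemma inS_jm F : inS (jm F).
Proof. by apply/existsP; exists F. Qed.
Definition jmM F : Mt := exist (fun w => inS w) (jm F) (inS_jm F).
Lemma jmM_surj (x : Mt) : exists F, jmM F = x.
Proof.
case: x => x px; have /existsP [F /eqP e] := px.
by exists F; apply: val_inj => /=.
Qed.

Lemma valB : val (\bot : Mt) = \bot. Proof. by []. Qed.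
Lemma valT : val (\top : Mt) = \top. Proof. by []. Qed.
Lemma valU (x y : Mt) : val (x `|` y) = val x `|` val y. Proof. by []. Qed.
Lemma valI (x y : Mt) : val (x `&` y) = val x `&` val y. Proof. by []. Qed.
Lemma valle (x y : Mt) : (val x <= val y) = (x <= y).
Proof. by []. Qed.

Definition subM (x y : Mt) : Mt := \meet_(F | x <= y `|` jmM F) jmM F.

Lemma join_meetsr (x : Mt) I (r : seq I) (P : pred I) (G : I -> Mt) :
  x `|` \meet_(i <- r | P i) G i = \meet_(i <- r | P i) (x `|` G i).
Proof. exact: (big_morph (Order.join x) (joinIr x) (joinx1 x)). Qed.

Lemma subM_coh : is_coheyting subM.
Proof.
move=> x y; split.
  rewrite /subM join_meetsr; apply/meetsP => F; by [].
move=> c lc; have [F eF] := jmM_surj c; rewrite -eF.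
by apply: meets_inf; rewrite eF.
Qed.

Lemma subM_val (sub : L -> L -> L) (Hsub : is_coheyting sub) (x y : Mt) :
  inS (sub (val x) (val y)) -> val (subM x y) = sub (val x) (val y).
Proof.
move=> hs; pose z : Mt := exist (fun w => inS w) _ hs.
have -> : sub (val x) (val y) = val z by [].
congr val; apply/le_anti/andP; split.
  have [_ H] := subM_coh x y; apply: H.
  by rewrite -valle valU; have [H _] := Hsub (val x) (val y).
have [_ H] := Hsub (val x) (val y); rewrite -valle; apply: H.
by rewrite -valU valle; have [H' _] := subM_coh x y.
Qed.
End FinSub.

Section Basic.
Context {disp : Order.disp_t} {L : tbDistrLatticeType disp}.

Definition ideal (K : L -> Prop) :=
  (forall x y, K y -> x <= y -> K x) /\ (forall x y, K x -> K y -> K (x `|` y)).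

Lemma PIT (J : L -> Prop) (a : L) : J \bot -> ideal J -> ~ J a ->
  exists q, [/\ prime_filter q, q a & forall x, J x -> ~ q x].
Proof.
move=> J0 [Jdn Jj] nJa.
pose P := fun X : L -> Prop => ideal (fun z => X z \/ J z) /\ ~ (X a \/ J a).
have [A [PA Amax]] : exists A, P A /\ forall B, classical_sets.proper A B -> ~ P B.
  apply: classical_sets.Zorn_bigcup => F FP Ftot; split; first split.
  - move=> x y [[X FX Xy]|Jy] lxy.
      have [[dn _] _] := FP X FX.
      case: (dn x y (or_introl Xy) lxy) => [Xx|Jx]; last by right.
      by left; exists X.
    by right; apply: Jdn Jy lxy.
  - move=> x y [[X FX Xx]|Jx] [[Y FY Yy]|Jy].
    + have [XY|YX] := Ftot X Y FX FY.
        have [[_ jn] _] := FP Y FY.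
        case: (jn x y (or_introl (XY _ Xx)) (or_introl Yy)) => [H|H]; last by right.
        by left; exists Y.
      have [[_ jn] _] := FP X FX.
      case: (jn x y (or_introl Xx) (or_introl (YX _ Yy))) => [H|H]; last by right.
      by left; exists X.
    + have [[_ jn] _] := FP X FX.
      case: (jn x y (or_introl Xx) (or_intror Jy)) => [H|H]; last by right.
      by left; exists X.
    + have [[_ jn] _] := FP Y FY.
      case: (jn x y (or_intror Jx) (or_introl Yy)) => [H|H]; last by right.
      by left; exists Y.
    + by right; apply: Jj.
  - case=> [[X FX Xa]|//].
    have [_ H] := FP X FX; apply: H; by left.
pose K := fun z => A z \/ J z.
have [[Kdn Kj] nKa] := PA.
have KJ : forall z, J z -> K z by move=> z; right.
have Kmax : forall K' : L -> Prop, ideal K' -> (forall z, K z -> K' z) -> ~ K' a ->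
    forall z, K' z -> K z.
  move=> K' [K'dn K'j] KK' nK'a z K'z.
  apply: contrapT => nKz; apply: (Amax K').
    split; first by move=> w Aw; apply: KK'; left.
    move=> H; apply: nKz; left; exact: H.
  split; first split.
  - move=> x y [H|H] lxy; left; [exact: K'dn H lxy|exact: K'dn (KK' _ (KJ _ H)) lxy].
  - move=> x y Hx Hy; left.
    have Hx' : K' x by case: Hx => // H; apply: KK'; right.
    have Hy' : K' y by case: Hy => // H; apply: KK'; right.
    exact: K'j.
  - by case=> // H; apply: nK'a; apply: KK'; right.
have Kprime : forall x y, K (x `&` y) -> K x \/ K y.
  move=> x y Kxy; apply: contrapT => /not_orP [nKx nKy].
  pose Kx := fun z => exists2 c, K c & z <= c `|` x.
  pose Ky := fun z => exists2 c, K c & z <= c `|` y.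
  have idl : forall w, ideal (fun z => exists2 c, K c & z <= c `|` w).
    move=> w; split.
      move=> u v [c Kc lv] luv; exists c => //; exact: le_trans luv lv.
    move=> u v [c Kc lu] [c' Kc' lv]; exists (c `|` c'); first exact: Kj.
    rewrite leUx; apply/andP; split.
      apply: le_trans lu _; by apply: leU2 => //; exact: leUl.
    apply: le_trans lv _; by apply: leU2 => //; exact: leUr.
  have sub_w : forall w z, K z -> exists2 c, K c & z <= c `|` w.
    by move=> w z Kz; exists z => //; rewrite leUl.
  have Kxa : Kx a.
    apply: contrapT => nKxa; apply: nKx; apply: (Kmax Kx (idl x) (sub_w x) nKxa).
    by exists \bot; [exact: KJ|rewrite join0x].
  have Kya : Ky a.
    apply: contrapT => nKya; apply: nKy; apply: (Kmax Ky (idl y) (sub_w y) nKya).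
    by exists \bot; [exact: KJ|rewrite join0x].
  case: Kxa => c1 Kc1 l1; case: Kya => c2 Kc2 l2.
  apply: nKa; apply: (Kdn a ((c1 `|` c2) `|` (x `&` y)) (Kj _ _ (Kj _ _ Kc1 Kc2) Kxy)).
  rewrite joinIr lexI; apply/andP; split.
    apply: le_trans l1 _; by apply: leU2 => //; exact: leUl.
  apply: le_trans l2 _; by apply: leU2 => //; exact: leUr.
exists (fun z => ~ K z); split.
- split.
  + move=> Kt; apply: nKa; exact: Kdn Kt (lex1 a).
  + by move=> H; apply: H; apply: KJ.
  + move=> x y nKx lxy Ky; apply: nKx; exact: Kdn Ky lxy.
  + move=> x y nKx nKy /Kprime [] //.
  + move=> x y nKxy; apply: contrapT => /not_orP [/contrapT Kx /contrapT Ky].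
    by apply: nKxy; apply: Kj.
- exact: nKa.
- by move=> x Jx; apply; apply: KJ.
Qed.


Section CH.
Variable sub : L -> L -> L.
Hypothesis Hsub : is_coheyting sub.

Lemma sub_min a b c : a <= b `|` c -> sub a b <= c.
Proof. by have [_ H] := Hsub a b; apply: H. Qed.
Lemma sub_cov a b : a <= b `|` sub a b.
Proof. by have [H _] := Hsub a b. Qed.
Lemma sub_le a b : sub a b <= a.
Proof. by apply: sub_min; rewrite leUr. Qed.
Lemma subxx a : sub a a = \bot.
Proof. by apply/le_anti; rewrite le0x andbT; apply: sub_min; rewrite joinx0. Qed.

Lemma pf_up (p : L -> Prop) x y : prime_filter p -> p x -> x <= y -> p y.
Proof. by case=> _ _ H _ _; apply: H. Qed.
Lemma pf_join (p : L -> Prop) x y : prime_filter p -> (p (x `|` y) <-> p x \/ p y).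
Proof.
move=> pp; split; first by case: pp => _ _ _ _; apply.
by case=> H; apply: pf_up H _; rewrite ?leUl ?leUr.
Qed.
Lemma pf_meet (p : L -> Prop) x y : prime_filter p -> (p (x `&` y) <-> p x /\ p y).
Proof.
move=> pp; split; last by case: pp => _ _ _ H _ [] /H; apply.
by move=> H; split; apply: pf_up H _; rewrite ?leIl ?leIr.
Qed.
Lemma pf_top (p : L -> Prop) : prime_filter p -> p \top.
Proof. by case. Qed.
Lemma pf_bot (p : L -> Prop) : prime_filter p -> ~ p \bot.
Proof. by case. Qed.

Lemma pf_sub (p : L -> Prop) a b : prime_filter p -> p a -> ~ p b -> p (sub a b).
Proof.
move=> pp pa npb; have := pf_up pp pa (sub_cov a b).
by case/(pf_join _ _ pp).
Qed.

Lemma sub_prime (p : L -> Prop) a b : prime_filter p -> p (sub a b) ->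
  exists q, [/\ prime_filter q, (forall x, q x -> p x), q a & ~ q b].
Proof.
move=> pp psab.
pose J := fun x => exists2 c, ~ p c & x <= c `|` b.
have J0 : J \bot by exists \bot; [exact: pf_bot|rewrite le0x].
have Ji : ideal J.
  split.
    move=> x y [c nc ly] lxy; exists c => //; exact: le_trans lxy ly.
  move=> x y [c nc lx] [c' nc' ly]; exists (c `|` c').
    by case/(pf_join _ _ pp).
  rewrite leUx; apply/andP; split.
    apply: le_trans lx _; by apply: leU2 => //; exact: leUl.
  apply: le_trans ly _; by apply: leU2 => //; exact: leUr.
have nJa : ~ J a.
  case=> c nc lac; apply: nc; apply: pf_up pp psab _; apply: sub_min.
  by rewrite joinC.
have [q [pq qa qJ]] := PIT J0 Ji nJa.
exists q; split => //.
  move=> x qx; apply: contrapT => npx; apply: (qJ x) => //.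
  by exists x => //; rewrite leUl.
by apply: qJ; exists \bot; [exact: pf_bot|rewrite join0x].
Qed.

Lemma height_mono (q p : L -> Prop) n : (forall x, q x -> p x) ->
  height_ge q n -> height_ge p n.
Proof.
case: n => // n qp [r [pr [[rq [x [qx nrx]]] hr]]].
exists r; split => //; split => //; split; first by move=> y /rq /qp.
by exists x; split => //; apply: qp.
Qed.

Lemma height_below (q p : L -> Prop) n : prime_filter q -> strict_sub q p ->
  ~ height_ge p n.+1 -> ~ height_ge q n.
Proof. by move=> pq sqp nh hq; apply: nh; exists q. Qed.

End CH.

Section Gen.
Variable sub : L -> L -> L.
Hypothesis Hsub : is_coheyting sub.
Variables (n : nat) (g : 'I_n -> L).
Hypothesis Hgen : generates sub g.

Lemma det_sub (p p' : L -> Prop) x y : prime_filter p -> prime_filter p' ->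
  (forall q, prime_filter q -> strict_sub q p -> strict_sub q p') ->
  (p x <-> p' x) -> (p y <-> p' y) -> p (sub x y) -> p' (sub x y).
Proof.
move=> pp pp' below ex ey psub.
have [q [pq qp qx nqy]] := sub_prime Hsub pp psub.
have [pq_all|] := pselect (forall z, p z -> q z).
  apply: (pf_sub Hsub pp'); first by apply/ex/qp.
  by move=> /ey /pq_all.
move=> /existsNP [z /not_implyP [pz nqz]].
have [qp' _] := below q pq (conj qp (ex_intro _ z (conj pz nqz))).
apply: qp'; exact: (pf_sub Hsub pq).
Qed.

Lemma det_eq (p p' : L -> Prop) : prime_filter p -> prime_filter p' ->
  (forall i, p (g i) <-> p' (g i)) ->
  (forall q, prime_filter q -> (strict_sub q p <-> strict_sub q p')) ->
  p = p'.
Proof.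
move=> pp pp' col below.
have H : forall t, p (ceval sub g t) <-> p' (ceval sub g t).
  elim=> [i|||t1 IH1 t2 IH2|t1 IH1 t2 IH2|t1 IH1 t2 IH2] /=.
  - exact: col.
  - split => H; [case: (pf_bot pp H)|case: (pf_bot pp' H)].
  - by split => _; [exact: pf_top pp'|exact: pf_top pp].
  - rewrite (pf_join _ _ pp) (pf_join _ _ pp'); tauto.
  - rewrite (pf_meet _ _ pp) (pf_meet _ _ pp'); tauto.
  - split.
      apply: det_sub => // q pq; by case: (below q pq).
    apply: det_sub => //; first by move=> q pq; case: (below q pq).
      by apply: iff_sym.
    by apply: iff_sym.
apply: funext => x; apply: propext; have [t <-] := Hgen x; exact: H.
Qed.

Lemma asb_iff (A B : Prop) : `[<A>] = `[<B>] -> (A <-> B).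
Proof. by move=> e; split => a; apply/asboolP; [rewrite -e|rewrite e]; apply/asboolP. Qed.

Lemma fin_height (h : nat) : exists (N : nat) (P : 'I_N -> (L -> Prop)),
  forall p, prime_filter p -> ~ height_ge p h -> exists i, P i = p.
Proof.
elim: h => [|h [N [P HP]]].
  by exists 0, (fun _ => (fun _ => False)) => p _ /(_ I).
pose valid := fun p : L -> Prop => prime_filter p /\ ~ height_ge p h.+1.
pose K : finType := ({ffun 'I_n -> bool} * {ffun 'I_N -> bool})%type.
pose key := fun p : L -> Prop =>
  ([ffun i => `[< p (g i) >]], [ffun i => `[< strict_sub (P i) p >]]) : K.
pose pick := fun k : K => epsilon (inhabits (fun _ : L => False))
                               (fun p => valid p /\ key p = k).
exists #|K|, (fun j : 'I_#|K| => pick (enum_val j)) => p pp nh.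
exists (enum_rank (key p)); rewrite enum_rankK.
have [[pp1 nh1] ek] : valid (pick (key p)) /\ key (pick (key p)) = key p.
  exact: (epsilon_spec (inhabits (fun _ : L => False)) (fun q => valid q /\ key q = key p)
           (ex_intro _ p (conj (conj pp nh) erefl))).
set p1 := pick (key p) in pp1 nh1 ek *.
case: ek => e1 e2.
apply: det_eq => //.
  move=> i; apply: asb_iff.
  by have := congr1 (fun f : {ffun 'I_n -> bool} => f i) e1; rewrite !ffunE.
have bel : forall (r r' : L -> Prop), valid r -> valid r' ->
    [ffun i => `[< strict_sub (P i) r >]] = [ffun i => `[< strict_sub (P i) r' >]] ->
    forall q, prime_filter q -> strict_sub q r -> strict_sub q r'.
  move=> r r' [pr nhr] _ e q pq sq.
  have [i Pi] := HP q pq (height_below pq sq nhr).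
  rewrite -Pi in sq *.
  have := congr1 (fun f : {ffun 'I_N -> bool} => f i) e; rewrite !ffunE => E; have [H _] := asb_iff E; exact: H sq.
move=> q pq; split.
  exact: bel (conj pp1 nh1) (conj pp nh) e2 q pq.
exact: bel (conj pp nh) (conj pp1 nh1) (esym e2) q pq.
Qed.

Lemma gen_precompact : precompact sub.
Proof.
move=> d _.
have [N [P HP]] := fin_height d.
pose keyA := fun a : L => [ffun i : 'I_N => `[< P i a >]].
pose pickA := fun k : {ffun 'I_N -> bool} =>
  epsilon (inhabits (\bot : L)) (fun a => keyA a = k).
exists [seq pickA k | k <- enum {: {ffun 'I_N -> bool}}] => a.
have eb : keyA (pickA (keyA a)) = keyA a.
  exact: (epsilon_spec (inhabits (\bot : L)) (fun b => keyA b = keyA a) (ex_intro _ a erefl)).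
exists (pickA (keyA a)); first by apply: map_f; rewrite mem_enum.
set b := pickA (keyA a) in eb *.
have agree : forall q, prime_filter q -> ~ height_ge q d -> (q a <-> q b).
  move=> q pq nh; have [i <-] := HP q pq nh.
  apply: asb_iff.
  by have := congr1 (fun f : {ffun 'I_N -> bool} => f i) eb; rewrite !ffunE.
have key : forall x y p, prime_filter p -> p (sub x y) ->
    (forall q, prime_filter q -> ~ height_ge q d -> (q x <-> q y)) -> height_ge p d.
  move=> x y p pp psub ag; apply: contrapT => nh.
  have [q [pq qp qx nqy]] := sub_prime Hsub pp psub.
  have nhq : ~ height_ge q d by move=> hq; apply: nh; exact: height_mono qp hq.
  by apply: nqy; apply/(ag q pq nhq).
move=> p pp /(pf_join _ _ pp) [H|H].
  exact: (key a b p pp H agree).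
apply: (key b a p pp H) => q pq nh; apply: iff_sym; exact: agree.
Qed.

End Gen.
End Basic.

Section Hom.
Context {d1 : Order.disp_t} {L : tbDistrLatticeType d1}
  {d2 : Order.disp_t} {M : tbDistrLatticeType d2}
  (subL : L -> L -> L) (subM : M -> M -> M) (f : L -> M).
Hypothesis hf : coheyting_hom subL subM f.

Lemma hom_ceval n (g : 'I_n -> L) (u : cterm n) :
  f (ceval subL g u) = ceval subM (fun i => f (g i)) u.
Proof.
case: hf => f0 f1 fU fI fS.
by elim: u => [i|||a IHa b IHb|a IHa b IHb|a IHa b IHb] //=;
  rewrite ?fU ?fI ?fS ?IHa ?IHb.
Qed.

Lemma hom_mono x y : x <= y -> f x <= f y.
Proof.
case: hf => _ _ fU _ _ /join_idPr e; apply/join_idPr; by rewrite -fU e.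
Qed.
End Hom.

Section FP.
Context {disp : Order.disp_t} {L : tbDistrLatticeType disp}.
Variable sub : L -> L -> L.
Hypothesis Hsub : is_coheyting sub.
Variables (n : nat) (g : 'I_n -> L).

Fixpoint nodes (u : cterm n) : seq L := ceval sub g u ::
  match u with
  | CJoin a b | CMeet a b | CSub a b => nodes a ++ nodes b
  | _ => [::] end.

Lemma evalM k (v : 'I_k -> L) (h : 'I_n -> Mt v) (u : cterm n) :
  (forall i, val (h i) = g i) ->
  (forall x, x \in nodes u -> inS v x) ->
  val (ceval (subM (v:=v)) h u) = ceval sub g u.
Proof.
move=> hg; elim: u => [i|||a IHa b IHb|a IHa b IHb|a IHa b IHb] /= Hn.
- exact: hg.
- by [].
- by [].
- by rewrite IHa ?IHb // => x xn; apply: Hn; rewrite inE mem_cat xn ?orbT.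
- by rewrite IHa ?IHb // => x xn; apply: Hn; rewrite inE mem_cat xn ?orbT.
- have ea : val (ceval (subM (v:=v)) h a) = ceval sub g a.
    by apply: IHa => x xn; apply: Hn; rewrite inE mem_cat xn ?orbT.
  have eb : val (ceval (subM (v:=v)) h b) = ceval sub g b.
    by apply: IHb => x xn; apply: Hn; rewrite inE mem_cat xn ?orbT.
  rewrite (subM_val Hsub) ea eb //.
  by apply: Hn; rewrite inE eqxx.
Qed.

End FP.

Lemma count_strict (T : eqType) (P1 P2 : pred T) (s : seq T) :
  (forall x, P1 x -> P2 x) -> (exists x, [/\ x \in s, P2 x & ~~ P1 x]) ->
  (count P1 s < count P2 s)%N.
Proof.
move=> H12.
have le_all : forall r : seq T, (count P1 r <= count P2 r)%N.
  elim=> //= z r IHr; apply: leq_add => //.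
  by case: (P1 z) (H12 z) => //= ->.
elim: s => [|y s IH] [x [xs p2 np1]]; first by [].
move: xs; rewrite inE => /orP [/eqP yx|xs].
  subst y; rewrite /= (negbTE np1) p2 /= add0n add1n ltnS; exact: le_all.
have lt := IH (ex_intro _ x (And3 xs p2 np1)).
rewrite /=; case: (P1 y) (H12 y) => /=.
  by move=> ->; rewrite // !add1n ltnS.
by case: (P2 y) => _; rewrite ?add1n ?add0n // ltnS ltnW.
Qed.

Section Haus.
Context {disp : Order.disp_t} {L : tbDistrLatticeType disp}.
Variable sub : L -> L -> L.
Hypothesis Hsub : is_coheyting sub.

Lemma fp_hausdorff : fin_presented sub -> @hausdorff disp L.
Proof.
move=> [n [m [g [E [Hgen Heq Huniv]]]]] a a0.
have [t ta] := Hgen a.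
pose vals := nodes sub g t ++ flatten [seq nodes sub g (E j).1 ++ nodes sub g (E j).2 | j <- enum 'I_m]
   ++ [seq g i | i <- enum 'I_n].
pose k := size vals.
pose v := fun i : 'I_k => nth \bot vals i.
have inV : forall x, x \in vals -> inS v x.
  move=> x xv; have ix : (index x vals < k)%N by rewrite index_mem.
  have -> : x = v (Ordinal ix) by rewrite /v /= nth_index.
  exact: inS_v.
have gV : forall i, g i \in vals.
  by move=> i; rewrite !mem_cat map_f ?mem_enum ?orbT.
pose h := fun i => exist (fun w => inS v w) (g i) (inV _ (gV i)) : Mt v.
have hg : forall i, val (h i) = g i by [].
have EV : forall j x, x \in nodes sub g (E j).1 ++ nodes sub g (E j).2 -> x \in vals.
  move=> j x xn; rewrite mem_cat; apply/orP; right; rewrite mem_cat; apply/orP; left.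
  apply/flattenP; exists (nodes sub g (E j).1 ++ nodes sub g (E j).2) => //.
  by apply: map_f; rewrite mem_enum.
have eqM : forall j, ceval (subM (v:=v)) h (E j).1 = ceval (subM (v:=v)) h (E j).2.
  move=> j; apply: val_inj; rewrite !(evalM Hsub hg) //.
  + by move=> x xn; apply: (inV _); apply: (EV j); rewrite mem_cat xn orbT.
  + by move=> x xn; apply: (inV _); apply: (EV j); rewrite mem_cat xn.
have [f [hf fg]] := Huniv _ (Mt v) (subM (v:=v)) (subM_coh (v:=v)) h eqM.
have fa : val (f a) = a.
  rewrite -{1}ta (hom_ceval hf).
  have -> : (fun i => f (g i)) = h by apply: funext => i; exact: fg.
  rewrite (evalM Hsub hg) // => x xn; apply: (inV _); by rewrite mem_cat xn.
have fa0 : f a <> \bot by move=> e; apply: a0; rewrite -fa e.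
case: (hf) => f0 _ fU _ fS.
pose kerf := fun x => f x = \bot.
have ker0 : kerf \bot by [].
have keri : ideal kerf.
  split.
    move=> x y ky lxy; apply/le_anti; rewrite le0x andbT -ky.
    move: lxy; exact: (hom_mono hf).
  by move=> x y kx ky; rewrite /kerf fU kx ky joinx0.
have [p [pp pa pk]] := PIT ker0 keri fa0.
exists p; split => //.
pose N := #|{: {set {set 'I_k}}}|.
pose cnt := fun q : L -> Prop =>
  count (fun F => `[< exists y, q y /\ val (f y) = jm v F >]) (enum {: {set {set 'I_k}}}).
have cntN : forall q, (cnt q <= N)%N.
  by move=> q; rewrite /N cardE; apply: count_size.
have key : forall r q, prime_filter q -> (forall x, q x -> p x) -> height_ge q r ->
    (r <= cnt q)%N.
  elim=> // r IH q pq qp [q' [pq' [[q'q [x [qx nq'x]]] hq']]].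
  have IHq' := IH q' pq' (fun z zq => qp z (q'q z zq)) hq'.
  apply: leq_ltn_trans IHq' _.
  apply: count_strict.
    move=> F /asboolP [y [q'y e]]; apply/asboolP; exists y; split => //; exact: q'q.
  have /existsP [F /eqP eF] := valP (f x).
  exists F; split.
  - by rewrite mem_enum.
  - by apply/asboolP; exists x; split.
  - apply/negP => /asboolP [y [q'y e]].
    have efy : f y = f x by apply: val_inj; rewrite e eF.
    have ksub : kerf (sub y x) by rewrite /kerf fS efy subxx //; exact: subM_coh.
    have : q' (x `|` sub y x) by apply: pf_up pq' q'y _; apply: sub_cov.
    case/(pf_join _ _ pq') => // H.
    by apply: (pk _ ksub); apply: qp; apply: q'q.
exists N.+1 => hp.
have := key _ _ pp (fun x px => px) hp.
by rewrite ltnNge cntN.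
Qed.

End Haus.

Theorem corollary5p5 :
  (forall (d : Order.disp_t) (L : tbDistrLatticeType d) (sub : L -> L -> L),
     is_coheyting sub -> fin_generated sub -> precompact sub) /\
  (forall (d : Order.disp_t) (L : tbDistrLatticeType d) (sub : L -> L -> L),
     is_coheyting sub -> fin_presented sub -> precompact sub /\ @hausdorff d L).
Proof.
split.
  move=> d L sub Hs [n [g Hg]]; exact: (gen_precompact Hs Hg).
move=> d L sub Hs Hfp; split; last exact: (fp_hausdorff Hs Hfp).
case: Hfp => [n [m [g [E [Hg _ _]]]]]; exact: (gen_precompact Hs Hg).
Qed.
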